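(* Let $\widetilde{A}$ be a $\Lambda$-standard weight algebra over the DVR $\mathcal{O}$, let $\widetilde{N}$ be an $\widetilde{A}$-lattice, $\lambda\in\Lambda$ and $v\in\widetilde{N}_\lambda$. (a) $v$ is $\lambda$-primitive if and only if $v\notin\widetilde{N}\cap\widetilde{N}'_K(\lambda)$ and $\mathcal{O}v+(\widetilde{N}\cap\widetilde{N}'_K(\lambda))$ is $\mathcal{O}$-pure in $\widetilde{N}$. (b) $v$ is strongly $\lambda$-primitive if and only if there is a non-negative integer $i$ such that $v\in\widetilde{\operatorname{rad}}^i\widetilde{N}$, $v\notin\widetilde{N}\cap(\operatorname{rad}^{i+1}\widetilde{N}_K+\widetilde{N}'_K(\lambda))$, and $\mathcal{O}v+\widetilde{N}\cap(\operatorname{rad}^{i+1}\widetilde{N}_K+\widetilde{N}'_K(\lambda))$ is $\mathcal{O}$-pure in $\widetilde{N}$. (c) If $v$ is strongly $\lambda$-primitive, it is $\lambda$-primitive.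
   Context: $\mathcal{O}$ is a DVR with fraction field $K$ and residue field $k$. $\widetilde{A}$ is an $\mathcal{O}$-free finite $\mathcal{O}$-algebra with orthogonal idempotents $e_\nu$ ($\nu\in X$) summing to $1$ making it a $\Lambda$-standard weight algebra: for $\Lambda\subseteq X$ partially ordered, the irreducible $\widetilde{A}_K$-modules $L_K(\lambda)$ and $\widetilde{A}_k$-modules $L(\lambda)$ are both indexed by $\Lambda$, with $\dim e_\lambda L_K(\lambda)=\dim e_\lambda L(\lambda)=1$ and, for $\mu\in\Lambda$, $e_\mu L_K(\lambda)\ne0$ or $e_\mu L(\lambda)\neq0$ implies $\mu\le\lambda$. For a module $M$, $M_\nu=e_\nu M$. An $\widetilde{A}$-lattice is $\mathcal{O}$-finite and torsion-free; a submodule $\widetilde{S}\subseteq\widetilde{M}$ is pure if $\widetilde{M}/\widetilde{S}$ is torsion-free. $\operatorname{rad}^i\widetilde{N}_K=(\operatorname{rad}\widetilde{A}_K)^i\widetilde{N}_K$, $\widetilde{\operatorname{rad}}^i\widetilde{N}=\widetilde{N}\cap\operatorname{rad}^i\widetilde{N}_K$, $\operatorname{gr}\widetilde{N}=\bigoplus_i\widetilde{\operatorname{rad}}^i\widetilde{N}/\widetilde{\operatorname{rad}}^{i+1}\widetilde{N}$. $\widetilde{N}'_K(\lambda)$ is the $\widetilde{A}_K$-submodule of $\widetilde{N}_K$ generated by all $\mu$-weight vectors with $\mu\in\Lambda$, $\mu>\lambda$. $v\in\widetilde{N}_\lambda$ is $\lambda$-primitive if the image of $\mathcal{O}v$ in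 $\widetilde{N}/(\widetilde{N}\cap\widetilde{N}'_K(\lambda))$ is nonzero and pure. $v$ is strongly $\lambda$-primitive if for some $i\ge0$ with $v\in\widetilde{\operatorname{rad}}^i\widetilde{N}$, its class $[v]\in(\operatorname{gr}\widetilde{N})_i$ has the property that the image of $\mathcal{O}[v]$ in $\operatorname{gr}(\widetilde{N}/(\widetilde{N}\cap\widetilde{N}'_K(\lambda)))$ (under the natural map) is nonzero and pure. *)

(* Defs.v *)
From HB Require Import structures.
From mathcomp Require Import all_boot all_order all_algebra all_field.
Set Implicit Arguments. Unset Strict Implicit. Unset Printing Implicit Defensive.
Import GRing.Theory.
Local Open Scope ring_scope.

Definition is_DVR (O : idomainType) : Prop :=
  exists pi : O, pi != 0 /\ pi \isn't a GRing.unit /\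
    forall x : O, x != 0 -> exists (u : O) (n : nat), u \is a GRing.unit /\ x = u * pi ^+ n.

Definition is_fraction_field (O : idomainType) (K : fieldType)
    (iota : {rmorphism O -> K}) : Prop :=
  injective iota /\ forall x : K, exists a b : O, b != 0 /\ x = iota a / iota b.

(* k = O / m, m the maximal ideal (= the non-units of the local ring O). *)
Definition is_residue_field (O : idomainType) (k : fieldType)
    (r : {rmorphism O -> k}) : Prop :=
  (forall y : k, exists a : O, r a = y) /\
  forall a : O, r a = 0 <-> a \isn't a GRing.unit.

Definition O_submodule (O : idomainType) (K : fieldType) (iota : {rmorphism O -> K})
    (V : lmodType K) (S : V -> Prop) : Prop :=
  S 0 /\ (forall x y, S x -> S y -> S (x + y)) /\ (forall (c : O) x, S x -> S (iota c *: x)).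

Definition O_pure (O : idomainType) (K : fieldType) (iota : {rmorphism O -> K})
    (V : lmodType K) (S T : V -> Prop) : Prop :=
  forall (y : V) (c : O), S y -> c != 0 -> T (iota c *: y) -> T y.

(* The tilde-algebra  A~  is the O-order At inside A_K = K (x)_O A~ :
   an O-subalgebra of A_K having an O-basis which is also a K-basis of A_K. *)
Definition O_free_order (O : idomainType) (K : fieldType) (iota : {rmorphism O -> K})
    (AK : falgType K) (At : AK -> Prop) : Prop :=
  O_submodule iota At /\ At 1 /\ (forall a b, At a -> At b -> At (a * b)) /\
  exists bs : seq AK, (forall b, b \in bs -> At b) /\ basis_of fullv bs /\
    forall a, At a -> exists c : 'I_(size bs) -> O, a = \sum_(i < size bs) iota (c i) *: bs`_i.

Definition idempotent_decomposition (K : fieldType) (AK : falgType K) (At : AK -> Prop)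
    (X : finType) (e : X -> AK) : Prop :=
  (forall x, At (e x)) /\ (forall x y, e x * e y = if x == y then e x else 0) /\
  \sum_(x : X) e x = 1.

Definition is_AKmod (K : fieldType) (AK : falgType K) (M : vectType K)
    (rho : AK -> 'End(M)) : Prop :=
  (forall (c : K) (a b : AK), rho (c *: a + b) = c *: rho a + rho b) /\
  rho 1 = \1%VF /\ forall a b, rho (a * b) = (rho a \o rho b)%VF.

(* an A_k-module structure (A_k = k (x)_O A~) on a k-space M, given as an
   O-algebra map A~ -> End_k(M)  (O acting on End_k(M) through r) *)
Definition is_Akmod (O : idomainType) (K k : fieldType) (iota : {rmorphism O -> K})
    (r : {rmorphism O -> k}) (AK : falgType K) (At : AK -> Prop) (M : vectType k)
    (rho : AK -> 'End(M)) : Prop :=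
  (forall a b, At a -> At b -> rho (a + b) = rho a + rho b) /\
  (forall (c : O) a, At a -> rho (iota c *: a) = r c *: rho a) /\
  rho 1 = \1%VF /\ (forall a b, At a -> At b -> rho (a * b) = (rho a \o rho b)%VF).

(* submodules, irreducibility, isomorphism: the acting elements are those in P *)
Definition is_submod (K F : fieldType) (AK : falgType K) (P : AK -> Prop) (M : vectType F)
    (rho : AK -> 'End(M)) (U : {vspace M}) : Prop :=
  forall a, P a -> (rho a @: U <= U)%VS.

Definition irreducible_mod (K F : fieldType) (AK : falgType K) (P : AK -> Prop)
    (M : vectType F) (rho : AK -> 'End(M)) : Prop :=
  (fullv : {vspace M}) != 0%VS /\
  forall U : {vspace M}, is_submod P rho U -> U = 0%VS \/ U = fullv.

Definition mod_iso (K F : fieldType) (AK : falgType K) (P : AK -> Prop)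
    (M1 M2 : vectType F) (rho1 : AK -> 'End(M1)) (rho2 : AK -> 'End(M2)) : Prop :=
  exists f : 'Hom(M1, M2), lker f = 0%VS /\ limg f = fullv /\
    forall a, P a -> (f \o rho1 a = rho2 a \o f)%VF.

Definition allK (K : fieldType) (AK : falgType K) : AK -> Prop := fun _ => True.

Definition partial_order_on (X : finType) (Lam : {pred X}) (le : rel X) : Prop :=
  (forall x, x \in Lam -> le x x) /\
  (forall x y, x \in Lam -> y \in Lam -> le x y -> le y x -> x = y) /\
  (forall x y z, x \in Lam -> y \in Lam -> z \in Lam -> le x y -> le y z -> le x z).

Definition standard_weight_algebra (O : idomainType) (K k : fieldType)
    (iota : {rmorphism O -> K}) (r : {rmorphism O -> k})
    (AK : falgType K) (At : AK -> Prop) (X : finType) (e : X -> AK)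
    (Lam : {pred X}) (le : rel X) : Prop :=
  partial_order_on Lam le /\
  (exists (LK : X -> vectType K) (rK : forall x, AK -> 'End(LK x)),
     (forall l, l \in Lam ->
        is_AKmod (rK l) /\ irreducible_mod (@allK K AK) (rK l) /\
        \dim (limg (rK l (e l))) = 1%N /\
        forall m, m \in Lam -> limg (rK l (e m)) != 0%VS -> le m l) /\
     (forall l l', l \in Lam -> l' \in Lam ->
        mod_iso (@allK K AK) (rK l) (rK l') -> l = l') /\
     (forall (M : vectType K) (rho : AK -> 'End(M)),
        is_AKmod rho -> irreducible_mod (@allK K AK) rho ->
        exists2 l, l \in Lam & mod_iso (@allK K AK) rho (rK l))) /\
  (exists (Lk : X -> vectType k) (rk : forall x, AK -> 'End(Lk x)),
     (forall l, l \in Lam ->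
        is_Akmod iota r At (rk l) /\ irreducible_mod At (rk l) /\
        \dim (limg (rk l (e l))) = 1%N /\
        forall m, m \in Lam -> limg (rk l (e m)) != 0%VS -> le m l) /\
     (forall l l', l \in Lam -> l' \in Lam -> mod_iso At (rk l) (rk l') -> l = l') /\
     (forall (M : vectType k) (rho : AK -> 'End(M)),
        is_Akmod iota r At rho -> irreducible_mod At rho ->
        exists2 l, l \in Lam & mod_iso At rho (rk l))).

(* N (a subset of N_K) is an A~-lattice with K-span N_K; rho is the A_K-action on N_K *)
Definition is_lattice (O : idomainType) (K : fieldType) (iota : {rmorphism O -> K})
    (AK : falgType K) (At : AK -> Prop) (NK : vectType K) (rho : AK -> 'End(NK))
    (N : NK -> Prop) : Prop :=
  is_AKmod rho /\ O_submodule iota N /\ (forall a v, At a -> N v -> N (rho a v)) /\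
  exists s : seq NK, (forall v, v \in s -> N v) /\ (<<s>>%VS = fullv) /\
    forall v, N v -> exists c : 'I_(size s) -> O, v = \sum_(i < size s) iota (c i) *: s`_i.

Definition weight_space (K : fieldType) (AK : falgType K) (NK : vectType K)
    (rho : AK -> 'End(NK)) (N : NK -> Prop) (el : AK) (v : NK) : Prop :=
  exists w, N w /\ v = rho el w.

Definition left_ideal (K : fieldType) (AK : falgType K) (I : {vspace AK}) : Prop :=
  forall a x, x \in I -> a * x \in I.

Definition max_left_ideal (K : fieldType) (AK : falgType K) (I : {vspace AK}) : Prop :=
  left_ideal I /\ I != fullv /\
  forall I' : {vspace AK}, left_ideal I' -> (I <= I')%VS -> I' = I \/ I' = fullv.

Definition jac_rad (K : fieldType) (AK : falgType K) (a : AK) : Prop :=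
  forall I, max_left_ideal I -> a \in I.

(* rad^i M_K = (rad A_K)^i M_K : the K-span of the vectors (a_1 ... a_i) m *)
Definition rad_pow (K : fieldType) (AK : falgType K) (M : vectType K)
    (rho : AK -> 'End(M)) (i : nat) (w : M) : Prop :=
  exists s : seq M,
    (forall x, x \in s -> exists (as_ : seq AK) (m : M),
        size as_ = i /\ (forall a, a \in as_ -> jac_rad a) /\
        x = rho (\prod_(a <- as_) a) m) /\
    w \in <<s>>%VS.

Definition rad_pow_t (K : fieldType) (AK : falgType K) (M : vectType K)
    (rho : AK -> 'End(M)) (S : M -> Prop) (i : nat) (w : M) : Prop :=
  S w /\ rad_pow rho i w.

Definition gen_submod (K : fieldType) (AK : falgType K) (M : vectType K)
    (rho : AK -> 'End(M)) (U : {vspace M}) : {vspace M} :=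
  (\sum_(a <- vbasis (fullv : {vspace AK})) (rho a @: U))%VS.

Definition Nprime (K : fieldType) (AK : falgType K) (X : finType) (e : X -> AK)
    (Lam : {pred X}) (le : rel X) (NK : vectType K) (rho : AK -> 'End(NK)) (l : X)
    : {vspace NK} :=
  gen_submod rho (\sum_(m | (m \in Lam) && (le l m) && (m != l)) limg (rho (e m)))%VS.

(* concrete model of N_K / N'_K : the complement C of N'_K, with projection along N'_K *)
Definition quotK (K : fieldType) (NK : vectType K) (W : {vspace NK}) : vectType K :=
  subvs_of (W^C)%VS.

Definition qproj (K : fieldType) (NK : vectType K) (W : {vspace NK}) (v : NK)
    : quotK W :=
  vsproj (W^C)%VS (daddv_pi (W^C)%VS W v).

Definition qact (K : fieldType) (AK : falgType K) (NK : vectType K)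
    (rho : AK -> 'End(NK)) (W : {vspace NK}) (a : AK) : 'End(quotK W) :=
  linfun (fun x : quotK W => qproj W (rho a (vsval x))).

Definition qlat (K : fieldType) (NK : vectType K) (W : {vspace NK}) (N : NK -> Prop)
    (x : quotK W) : Prop :=
  exists v, N v /\ x = qproj W v.
Arguments qlat {K NK} W N x.

Definition primitive (O : idomainType) (K : fieldType) (iota : {rmorphism O -> K})
    (AK : falgType K) (X : finType) (e : X -> AK) (Lam : {pred X}) (le : rel X)
    (NK : vectType K) (rho : AK -> 'End(NK)) (N : NK -> Prop) (l : X) (v : NK) : Prop :=
  let W := Nprime e Lam le rho l in
  let x := qproj W v in
  x != 0 /\
  O_pure iota (qlat W N) (fun y => exists d : O, y = iota d *: x).

Definition strongly_primitive (O : idomainType) (K : fieldType) (iota : {rmorphism O -> K})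
    (AK : falgType K) (X : finType) (e : X -> AK) (Lam : {pred X}) (le : rel X)
    (NK : vectType K) (rho : AK -> 'End(NK)) (N : NK -> Prop) (l : X) (v : NK) : Prop :=
  let W := Nprime e Lam le rho l in
  let x := qproj W v in
  let radM := rad_pow_t (qact rho W) (qlat W N) in
  exists i : nat, rad_pow_t rho N i v /\
    (* [x] <> 0 in (gr M~)_i = rad~^i M~ / rad~^(i+1) M~ *)
    ~ radM i.+1 x /\
    (* O[x] is pure in (gr M~)_i *)
    (forall (y : quotK W) (c : O), radM i y -> c != 0 ->
       (exists d : O, radM i.+1 (iota c *: y - iota d *: x)) ->
       exists d : O, radM i.+1 (y - iota d *: x)).

(* Main.v *)
Require Import Defs.
From HB Require Import structures.
From mathcomp Require Import all_boot all_order all_algebra all_field.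
Set Implicit Arguments. Unset Strict Implicit. Unset Printing Implicit Defensive.
Import GRing.Theory.
Local Open Scope ring_scope.

Lemma lfunE' (K : fieldType) (aT rT : vectType K) (f : aT -> rT) :
  linear f -> forall x, linfun f x = f x.
Proof.
move=> lf x.
pose g : {linear aT -> rT} := HB.pack f (GRing.isSemilinear.Build K aT rT _ f (GRing.semilinear_linear lf)).
exact: (lfunE g x).
Qed.

Lemma span_ind (K : fieldType) (A : vectType K) (P : A -> Prop) (s : seq A) y :
  P 0 -> (forall a b, P a -> P b -> P (a + b)) -> (forall c a, P a -> P (c *: a)) ->
  (forall x, x \in s -> P x) -> y \in <<s>>%VS -> P y.
Proof.
move=> P0 PD PZ; elim: s y => [|x s IH] y Hs.
  by rewrite span_nil memv0 => /eqP ->.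
rewrite span_cons => /memv_addP [a Ha [b Hb ->]].
case/vlineP: Ha => c ->; apply: PD; first by apply: PZ; apply: Hs; rewrite mem_head.
by apply: IH => // z Hz; apply: Hs; rewrite in_cons Hz orbT.
Qed.


Lemma qprojD (K : fieldType) (NK : vectType K) (W : {vspace NK}) x y :
  qproj W (x + y) = qproj W x + qproj W y.
Proof. by rewrite /qproj !linearD. Qed.
Lemma qprojZ (K : fieldType) (NK : vectType K) (W : {vspace NK}) (c : K) x :
  qproj W (c *: x) = c *: qproj W x.
Proof. by rewrite /qproj !linearZ. Qed.
Lemma qproj0 (K : fieldType) (NK : vectType K) (W : {vspace NK}) :
  qproj W 0 = 0.
Proof. by rewrite /qproj !linear0. Qed.
Lemma qprojB (K : fieldType) (NK : vectType K) (W : {vspace NK}) x y :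
  qproj W (x - y) = qproj W x - qproj W y.
Proof. by rewrite /qproj !linearB. Qed.

Lemma qproj_val (K : fieldType) (NK : vectType K) (W : {vspace NK}) x :
  vsval (qproj W x) = daddv_pi (W^C)%VS W x.
Proof. by rewrite /qproj vsprojK // memv_pi. Qed.

Lemma qproj_split (K : fieldType) (NK : vectType K) (W : {vspace NK}) x :
  daddv_pi (W^C)%VS W x + daddv_pi W (W^C)%VS x = x.
Proof. apply: daddv_pi_add; first by rewrite capvC capv_compl. by rewrite addvC addv_complf memvf. Qed.

Lemma qproj_eq0 (K : fieldType) (NK : vectType K) (W : {vspace NK}) x :
  qproj W x = 0 <-> x \in W.
Proof.
split => [H|H].
  have := qproj_split W x; rewrite -qproj_val H /= add0r => <-; exact: memv_pi.
apply: val_inj; rewrite /= qproj_val.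
have := qproj_split W x; rewrite (daddv_pi_id (capv_compl W) H).
by move/(canRL (addrK x)); rewrite subrr.
Qed.

Lemma qproj_vsval (K : fieldType) (NK : vectType K) (W : {vspace NK}) (y : quotK W) :
  qproj W (vsval y) = y.
Proof.
rewrite /qproj daddv_pi_id ?vsvalK //; first by rewrite capvC capv_compl. exact: subvsP.
Qed.

Lemma qproj_sub (K : fieldType) (NK : vectType K) (W : {vspace NK}) x :
  x - vsval (qproj W x) \in W.
Proof.
apply/qproj_eq0; by rewrite qprojB qproj_vsval subrr.
Qed.


Lemma rho_lin (K : fieldType) (AK : falgType K) (M : vectType K) (rho : AK -> 'End(M)) :
  is_AKmod rho ->
  [/\ rho 0 = 0, (forall a b, rho (a + b) = rho a + rho b) &
      (forall (c : K) a, rho (c *: a) = c *: rho a)].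
Proof.
case=> H _.
have H0 : rho 0 = 0.
  have := H 1 0 0; rewrite !scale1r addr0 => E.
  by move: (congr1 (fun x => x - rho 0) E) => /=; rewrite subrr addrK => <-.
split; [done| move=> a b | move=> c a].
  by have := H 1 a b; rewrite !scale1r.
by have := H c a 0; rewrite !addr0 H0 addr0.
Qed.

Lemma rho_sum (K : fieldType) (AK : falgType K) (M : vectType K) (rho : AK -> 'End(M))
  n (F : 'I_n -> AK) : is_AKmod rho -> rho (\sum_(i < n) F i) = \sum_(i < n) rho (F i).
Proof.
move=> /rho_lin [H0 HD _]; exact: (big_morph rho HD H0).
Qed.

Lemma gen_submod_stable (K : fieldType) (AK : falgType K) (M : vectType K)
  (rho : AK -> 'End(M)) (U : {vspace M}) :
  is_AKmod rho -> forall a w, w \in gen_submod rho U -> rho a w \in gen_submod rho U.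
Proof.
move=> Hr a w Hw; set G := gen_submod rho U.
have [_ _ HZ] := rho_lin Hr.
have Hc : forall c u, u \in U -> rho c u \in G.
  move=> c u Hu; rewrite (coord_vbasis (memvf c)) rho_sum // sum_lfunE.
  apply: rpred_sum => i _; rewrite HZ scale_lfunE; apply: memvZ.
  have Hin : (vbasis (fullv : {vspace AK}))`_i \in vbasis (fullv : {vspace AK}).
    by apply: mem_nth; rewrite size_tuple.
  rewrite /G /gen_submod (big_rem _ Hin) /=.
  apply: (subvP (addvSl _ _)); exact: memv_img.
have HG : (rho a @: G <= G)%VS.
  rewrite {1}/G /gen_submod limg_sum.
  apply: (big_ind (fun V => (V <= G)%VS)) => [|V1 V2 H1 H2|b _].
  - exact: sub0v.
  - by rewrite subv_add H1 H2.
  - rewrite -limg_comp; apply/subvP => y /memv_imgP [u Hu ->].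
    have Hmul : forall a b, rho (a*b) = (rho a \o rho b)%VF by case: Hr => _ [].
    by rewrite -Hmul; apply: Hc.
exact: (subvP HG _ (memv_img _ Hw)).
Qed.

Lemma rp0 (K : fieldType) (AK : falgType K) (M : vectType K) (rho : AK -> 'End(M)) i :
  rad_pow rho i 0.
Proof. exists [::]; split => //; exact: mem0v. Qed.

Lemma rpD (K : fieldType) (AK : falgType K) (M : vectType K) (rho : AK -> 'End(M)) i x y :
  rad_pow rho i x -> rad_pow rho i y -> rad_pow rho i (x + y).
Proof.
move=> [s1 [H1 m1]] [s2 [H2 m2]]; exists (s1 ++ s2); split.
  by move=> z; rewrite mem_cat => /orP [] ?; [exact: H1|exact: H2].
rewrite span_cat; exact: memv_add.
Qed.

Lemma rpZ (K : fieldType) (AK : falgType K) (M : vectType K) (rho : AK -> 'End(M)) i c x :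
  rad_pow rho i x -> rad_pow rho i (c *: x).
Proof. by move=> [s [H m]]; exists s; split => //; exact: memvZ. Qed.

Lemma qact_eval (K : fieldType) (AK : falgType K) (NK : vectType K)
  (rho : AK -> 'End(NK)) (W : {vspace NK}) a x :
  qact rho W a x = qproj W (rho a (vsval x)).
Proof.
rewrite /qact lfunE' // => c y z /=.
by rewrite linearD linearZ qprojD qprojZ.
Qed.

Lemma qproj_rho (K : fieldType) (AK : falgType K) (NK : vectType K)
  (rho : AK -> 'End(NK)) (W : {vspace NK}) :
  (forall a w, w \in W -> rho a w \in W) ->
  forall a m, qproj W (rho a m) = qact rho W a (qproj W m).
Proof.
move=> HW a m; rewrite qact_eval.
have Hw := qproj_sub W m; set w := m - _ in Hw.
have -> : vsval (qproj W m) = m - w by rewrite /w opprB addrC subrK.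
by rewrite linearB qprojB (proj2 (qproj_eq0 W _) (HW a w Hw)) subr0.
Qed.

Lemma qrad_lift (K : fieldType) (AK : falgType K) (NK : vectType K)
  (rho : AK -> 'End(NK)) (W : {vspace NK}) j u :
  rad_pow (qact rho W) j (qproj W u) ->
  exists y z, rad_pow rho j y /\ z \in W /\ u = y + z.
Proof.
move=> [s [Hs Hm]].
have [Y [HY E]] : exists Y, rad_pow rho j Y /\ qproj W u = qproj W Y.
  apply: (@span_ind _ _ (fun y => exists Y, rad_pow rho j Y /\ y = qproj W Y) s) Hm.
  - by exists 0; split; [exact: rp0 | rewrite qproj0].
  - move=> a b [Ya [Ha ->]] [Yb [Hb ->]]; exists (Ya + Yb).
    by split; [exact: rpD | rewrite qprojD].
  - move=> c a [Ya [Ha ->]]; exists (c *: Ya).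
    by split; [exact: rpZ | rewrite qprojZ].
  - move=> x /Hs [as_ [m [Hsz [Hj ->]]]].
    exists (rho (\prod_(a <- as_) a) (vsval m)); split; last by rewrite qact_eval.
    exists [:: rho (\prod_(a <- as_) a) (vsval m)]; split; last exact: memv_span1.
    by move=> z; rewrite inE => /eqP ->; exists as_, (vsval m).
exists Y, (u - Y); split => //; split; last by rewrite addrC subrK.
by apply/qproj_eq0; rewrite qprojB E subrr.
Qed.

Lemma qrad_push (K : fieldType) (AK : falgType K) (NK : vectType K)
  (rho : AK -> 'End(NK)) (W : {vspace NK}) j u :
  (forall a w, w \in W -> rho a w \in W) ->
  (exists y z, rad_pow rho j y /\ z \in W /\ u = y + z) ->
  rad_pow (qact rho W) j (qproj W u).
Proof.
move=> HW [y [z [[s [Hs Hm]] [Hz ->]]]].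
rewrite qprojD (proj2 (qproj_eq0 W z) Hz) addr0.
apply: (@span_ind _ _ (fun Y => rad_pow (qact rho W) j (qproj W Y)) s y) => //.
- rewrite qproj0; exact: rp0.
- by move=> a b Ha Hb; rewrite qprojD; apply: rpD.
- by move=> c a Ha; rewrite qprojZ; apply: rpZ.
- move=> x /Hs [as_ [m [Hsz [Hj ->]]]]; rewrite (qproj_rho HW).
  exists [:: qact rho W (\prod_(a <- as_) a) (qproj W m)]; split; last exact: memv_span1.
  by move=> z'; rewrite inE => /eqP ->; exists as_, (qproj W m).
Qed.

Lemma rad_succ (K : fieldType) (AK : falgType K) (M : vectType K)
  (rho : AK -> 'End(M)) j y :
  is_AKmod rho -> rad_pow rho j.+1 y -> rad_pow rho j y.
Proof.
move=> Hr [s [Hs Hm]].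
have Hmul : forall a b, rho (a*b) = (rho a \o rho b)%VF by case: Hr => _ [].
apply: (@span_ind _ _ (rad_pow rho j) s y) => //.
- exact: rp0.
- by move=> *; exact: rpD.
- by move=> *; exact: rpZ.
move=> x /Hs [as_ [m [Hsz [Hj ->]]]]; move: Hsz Hj.
case/lastP: as_ => [|as' z] //; rewrite size_rcons => -[Hsz] Hj.
rewrite -cats1 big_cat big_seq1 /= Hmul comp_lfunE.
exists [:: rho (\prod_(a <- as') a) (rho z m)]; split; last exact: memv_span1.
move=> w; rewrite inE => /eqP ->; exists as', (rho z m); split => //; split => // a Ha.
by apply: Hj; rewrite mem_rcons in_cons Ha orbT.
Qed.

Lemma NB (O : idomainType) (K : fieldType) (iota : {rmorphism O -> K}) (NK : vectType K)
  (N : NK -> Prop) : O_submodule iota N -> forall x y, N x -> N y -> N (x - y).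
Proof.
move=> [N0 [ND NZ]] x y Hx Hy; apply: ND => //.
by have := NZ (-1) y Hy; rewrite rmorphN1 scaleN1r.
Qed.

Lemma partA (O : idomainType) (K : fieldType) (iota : {rmorphism O -> K})
  (NK : vectType K) (N : NK -> Prop) (W : {vspace NK}) (v : NK) :
  O_submodule iota N -> N v ->
  ((qproj W v != 0 /\ O_pure iota (qlat W N) (fun y => exists d : O, y = iota d *: qproj W v)) <->
   (~ (N v /\ v \in W) /\
    O_pure iota N (fun w => exists (d : O) (z : NK), (N z /\ z \in W) /\ w = iota d *: v + z))).
Proof.
move=> HN Nv; have [N0 [ND NZ]] := HN.
split.
- move=> [Hx Hp]; split.
  + by move=> [_ Hv]; move/negP: Hx; apply; apply/eqP/qproj_eq0.
  + move=> y c Ny Hc [d [z [[Nz Wz] E]]].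
    have [d' E'] : exists d', qproj W y = iota d' *: qproj W v.
      apply: (Hp (qproj W y) c) => //; first by exists y.
      by exists d; rewrite -(qprojZ W (iota c) y) E qprojD qprojZ (proj2 (qproj_eq0 W z) Wz) addr0.
    exists d', (y - iota d' *: v); split; last by rewrite addrC subrK.
    split; first by apply: (NB HN) => //; apply: NZ.
    by apply/qproj_eq0; rewrite qprojB qprojZ E' subrr.
- move=> [Hnv Hp]; split.
  + by apply/eqP => /qproj_eq0 Wv; apply: Hnv.
  + move=> y c [w [Nw ->]] Hc [d E].
    have [d' [z' [[Nz' Wz'] Ew]]] :
        exists d' z', (N z' /\ z' \in W) /\ w = iota d' *: v + z'.
      apply: (Hp w c Nw Hc); exists d, (iota c *: w - iota d *: v).
      split; last by rewrite addrC subrK.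
      split; first by apply: (NB HN); apply: NZ.
      by apply/qproj_eq0; rewrite qprojB !qprojZ E subrr.
    by exists d'; rewrite Ew qprojD qprojZ (proj2 (qproj_eq0 W z') Wz') addr0.
Qed.

Definition Rsp (K : fieldType) (AK : falgType K) (NK : vectType K)
  (rho : AK -> 'End(NK)) (W : {vspace NK}) j u :=
  exists y z, rad_pow rho j y /\ z \in W /\ u = y + z.

Lemma RspD (K : fieldType) (AK : falgType K) (NK : vectType K)
  (rho : AK -> 'End(NK)) (W : {vspace NK}) j a b :
  Rsp rho W j a -> Rsp rho W j b -> Rsp rho W j (a + b).
Proof.
move=> [y1 [z1 [H1 [W1 ->]]]] [y2 [z2 [H2 [W2 ->]]]].
exists (y1 + y2), (z1 + z2); split; first exact: rpD.
by split; [exact: memvD | rewrite addrACA].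
Qed.

Lemma RspZ (K : fieldType) (AK : falgType K) (NK : vectType K)
  (rho : AK -> 'End(NK)) (W : {vspace NK}) j c a :
  Rsp rho W j a -> Rsp rho W j (c *: a).
Proof.
move=> [y1 [z1 [H1 [W1 ->]]]]; exists (c *: y1), (c *: z1); split; first exact: rpZ.
by split; [exact: memvZ | rewrite scalerDr].
Qed.

Lemma Rsp_rad (K : fieldType) (AK : falgType K) (NK : vectType K)
  (rho : AK -> 'End(NK)) (W : {vspace NK}) j a :
  rad_pow rho j a -> Rsp rho W j a.
Proof. by move=> H; exists a, 0; rewrite addr0; split => //; split => //; exact: mem0v. Qed.

Lemma Rsp_succ (K : fieldType) (AK : falgType K) (NK : vectType K)
  (rho : AK -> 'End(NK)) (W : {vspace NK}) j a :
  is_AKmod rho -> Rsp rho W j.+1 a -> Rsp rho W j a.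
Proof.
move=> Hr [y [z [H [Wz ->]]]]; exists y, z; split => //; exact: rad_succ H.
Qed.

Lemma partB (O : idomainType) (K : fieldType) (iota : {rmorphism O -> K})
  (AK : falgType K) (NK : vectType K) (rho : AK -> 'End(NK))
  (N : NK -> Prop) (W : {vspace NK}) (v : NK) :
  O_submodule iota N -> N v -> injective iota -> is_AKmod rho ->
  (forall a w, w \in W -> rho a w \in W) ->
  ((exists i : nat, rad_pow_t rho N i v /\
     ~ rad_pow_t (qact rho W) (qlat W N) i.+1 (qproj W v) /\
     (forall (y : quotK W) (c : O), rad_pow_t (qact rho W) (qlat W N) i y -> c != 0 ->
       (exists d : O, rad_pow_t (qact rho W) (qlat W N) i.+1 (iota c *: y - iota d *: qproj W v)) ->
       exists d : O, rad_pow_t (qact rho W) (qlat W N) i.+1 (y - iota d *: qproj W v)))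
  <->
   (exists i : nat, rad_pow_t rho N i v /\
       ~ (N v /\ exists y z, rad_pow rho i.+1 y /\ z \in W /\ v = y + z) /\
       O_pure iota N (fun w => exists (d : O) (u : NK),
          (N u /\ exists y z, rad_pow rho i.+1 y /\ z \in W /\ u = y + z) /\
          w = iota d *: v + u))).
Proof.
move=> HN Nv Hinj Hr HW; have [N0 [ND NZ]] := HN.
have Hic : forall c : O, c != 0 -> iota c != 0.
  by move=> c Hc; apply/eqP => H; move/eqP: Hc; apply; apply: Hinj; rewrite H rmorph0.
split.
- move=> [i [[_ Hv] [Hn Hp]]]; exists i; split => //; split.
  + move=> [_ Rv]; apply: Hn; split; [by exists v | exact: qrad_push].
  + move=> y c Ny Hc [d [u [[Nu Ru] E]]].
    have Ry : Rsp rho W i y.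
      have -> : y = (iota c)^-1 *: (iota c *: y) by rewrite scalerA mulVf ?scale1r // Hic.
      rewrite E; apply: RspZ; apply: RspD; first by apply: RspZ; exact: Rsp_rad.
      exact: Rsp_succ Ru.
    have H1 : rad_pow_t (qact rho W) (qlat W N) i (qproj W y).
      by split; [exists y | exact: qrad_push].
    have H2 : exists d0, rad_pow_t (qact rho W) (qlat W N) i.+1
                 (iota c *: qproj W y - iota d0 *: qproj W v).
      exists d; rewrite -!qprojZ -qprojB E.
      have -> : iota d *: v + u - iota d *: v = u by rewrite addrC addKr.
      by split; [exists u | exact: qrad_push].
    have [d' [_ Hr']] := Hp _ _ H1 Hc H2.
    rewrite -qprojZ -qprojB in Hr'; have Rr := qrad_lift Hr'.
    exists d', (y - iota d' *: v); split; last by rewrite addrC subrK.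
    by split => //; apply: (NB HN) => //; exact: NZ.
- move=> [i [[Nv' Hv] [Hn Hp]]]; exists i; split => //; split.
  + by move=> [_ Hr']; apply: Hn; split => //; exact: qrad_lift Hr'.
  + move=> y c [[w [Nw ->]] _] Hc [d [_ Hr']].
    rewrite -!qprojZ -qprojB in Hr'; have Ru := qrad_lift Hr'.
    have Hex : exists (d0 : O) (u : NK),
        (N u /\ exists y z, rad_pow rho i.+1 y /\ z \in W /\ u = y + z) /\
        iota c *: w = iota d0 *: v + u.
      exists d, (iota c *: w - iota d *: v); split; last by rewrite addrC subrK.
      by split => //; apply: (NB HN); apply: NZ.
    have [d' [u' [[Nu' Ru'] Ew]]] := Hp w c Nw Hc Hex.
    exists d'.
    have -> : qproj W w - iota d' *: qproj W v = qproj W u'.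
      by rewrite Ew qprojD qprojZ addrAC subrr add0r.
    split; first by exists u'.
    exact: qrad_push.
Qed.

Lemma partC (O : idomainType) (K : fieldType) (iota : {rmorphism O -> K})
  (AK : falgType K) (NK : vectType K) (rho : AK -> 'End(NK))
  (N : NK -> Prop) (W : {vspace NK}) (v : NK) :
  O_submodule iota N -> N v -> injective iota -> is_AKmod rho ->
  (forall a w, w \in W -> rho a w \in W) ->
  (exists i : nat, rad_pow_t rho N i v /\
     ~ rad_pow_t (qact rho W) (qlat W N) i.+1 (qproj W v) /\
     (forall (y : quotK W) (c : O), rad_pow_t (qact rho W) (qlat W N) i y -> c != 0 ->
       (exists d : O, rad_pow_t (qact rho W) (qlat W N) i.+1 (iota c *: y - iota d *: qproj W v)) ->
       exists d : O, rad_pow_t (qact rho W) (qlat W N) i.+1 (y - iota d *: qproj W v))) ->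
  (qproj W v != 0 /\ O_pure iota (qlat W N) (fun y => exists d : O, y = iota d *: qproj W v)).
Proof.
move=> HN Nv Hinj Hr HW; have [N0 [ND NZ]] := HN.
move=> [i [[_ Hv] [Hn Hp]]].
have Hxi : rad_pow (qact rho W) i (qproj W v).
  by apply: qrad_push => //; exact: Rsp_rad.
set x := qproj W v in Hn Hp Hxi *.
split.
- apply/eqP => Hx0; apply: Hn; rewrite Hx0; split; last exact: rp0.
  by exists 0; rewrite qproj0.
- move=> y c [w [Nw Ey]] Hc [d E].
  have Hic : iota c != 0.
    by apply/eqP => H; move/eqP: Hc; apply; apply: Hinj; rewrite H rmorph0.
  set t := iota d / iota c.
  have Ey' : y = t *: x.
    by rewrite /t mulrC -scalerA -E scalerA mulVf // scale1r.
  have H1 : rad_pow_t (qact rho W) (qlat W N) i y.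
    by split; [exists w | rewrite Ey'; exact: rpZ].
  have H2 : exists d0, rad_pow_t (qact rho W) (qlat W N) i.+1 (iota c *: y - iota d0 *: x).
    exists d; rewrite E subrr; split; last exact: rp0.
    by exists 0; rewrite qproj0.
  have [d' [Hq Hr']] := Hp y c H1 Hc H2.
  exists d'.
  case: (eqVneq (t - iota d') 0) => Ht.
  + by move/eqP: Ht; rewrite subr_eq0 => /eqP <-.
  + exfalso; apply: Hn; split; first by exists v.
    have -> : x = (t - iota d')^-1 *: (y - iota d' *: x).
      by rewrite Ey' -scalerBl scalerA mulVf // scale1r.
    exact: rpZ.
Qed.

Theorem proposition4p4 (O : idomainType) (K k : fieldType)
    (iota : {rmorphism O -> K}) (r : {rmorphism O -> k})
    (AK : falgType K) (At : AK -> Prop) (X : finType) (e : X -> AK)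
    (Lam : {pred X}) (le : rel X)
    (NK : vectType K) (rho : AK -> 'End(NK)) (N : NK -> Prop)
    (l : X) (v : NK) :
  is_DVR O -> is_fraction_field iota -> is_residue_field r ->
  O_free_order iota At -> idempotent_decomposition At e ->
  standard_weight_algebra iota r At e Lam le ->
  is_lattice iota At rho N ->
  l \in Lam -> weight_space rho N (e l) v ->
  let NP := Nprime e Lam le rho l in
  (* (a) *)
  (primitive iota e Lam le rho N l v <->
     ~ (N v /\ v \in NP) /\
     O_pure iota N (fun w => exists (d : O) (z : NK), (N z /\ z \in NP) /\ w = iota d *: v + z))
  /\
  (* (b) *)
  (strongly_primitive iota e Lam le rho N l v <->
     exists i : nat, rad_pow_t rho N i v /\
       ~ (N v /\ exists y z, rad_pow rho i.+1 y /\ z \in NP /\ v = y + z) /\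
       O_pure iota N (fun w => exists (d : O) (u : NK),
          (N u /\ exists y z, rad_pow rho i.+1 y /\ z \in NP /\ u = y + z) /\
          w = iota d *: v + u))
  /\
  (* (c) *)
  (strongly_primitive iota e Lam le rho N l v -> primitive iota e Lam le rho N l v).
Proof.
move=> _ [Hinj _] _ _ [HeAt _] _ [Hr [HN [HAt _]]] Hl [w [Nw ->]] NP.
have Nv : N (rho (e l) w) := HAt _ _ (HeAt l) Nw.
have HW : forall a z, z \in NP -> rho a z \in NP.
  by move=> a z; apply: gen_submod_stable.
split; first exact: (partA _ HN Nv).
split; first exact: (partB HN Nv Hinj Hr HW).
exact: (partC HN Nv Hinj Hr HW).
Qed.
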